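(* Let $E_0>0$ and let $\phi$ satisfy the standing assumptions below with some $n\in\{0,1,2,\dots\}$. Then there exists $0<V^*<E_0$ such that for all $V\in[V^*,E_0)$, $\frac{\xi_{1/2}(V)}{\xi_{-1/2}(V)}\le\frac{101\,(E_0+V)(E_0-V)}{100\,(3+2n)\,V^2}$.
   Context: Standing assumptions on $\phi:(-\infty,1]\to\mathbb R_+$: $\phi(x)=0$ for $x<0$, $\phi$ analytic on $[0,1]$, and $\phi'(0)=\dots=\phi^{(n-1)}(0)=0$, $\phi^{(n)}(0)>0$. For $\kappa\in\{\frac32,\frac12,-\frac12\}$ and $V\in(0,E_0]$: $\xi_\kappa(V)=\frac{4\pi}{V}\int_V^{E_0}\phi(1-E/E_0)\left(\frac{E^2}{V^2}-1\right)^\kappa dE$. *)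

(* Defs.v *)
From Stdlib Require Import Reals Lra Arith Factorial.
Open Scope R_scope.

(* phi : (-oo,1] -> R_+ is modelled as a total function R -> R; only its
   values on (-oo,1] matter. *)

Definition analytic_on_01 (phi : R -> R) : Prop :=
  forall x0, 0 <= x0 <= 1 ->
    exists r, 0 < r /\ exists a : nat -> R,
      forall x, 0 <= x <= 1 -> Rabs (x - x0) < r ->
        infinite_sum (fun k => a k * (x - x0) ^ k) (phi x).

(* [d] is the k-th (right) derivative of phi at 0, as an analytic function on
   [0,1]: phi(x) = sum_j a_j x^j on [0, r) and d = k! * a_k. *)
Definition rderiv0 (phi : R -> R) (k : nat) (d : R) : Prop :=
  exists r, 0 < r /\ exists a : nat -> R,
    (forall x, 0 <= x <= 1 -> x < r ->
       infinite_sum (fun j => a j * x ^ j) (phi x)) /\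
    d = INR (fact k) * a k.

Definition phi_assumptions (phi : R -> R) (n : nat) : Prop :=
  (forall x, x <= 1 -> 0 <= phi x) /\
  (forall x, x < 0 -> phi x = 0) /\
  analytic_on_01 phi /\
  (forall k, (k < n)%nat -> rderiv0 phi k 0) /\
  (exists d, rderiv0 phi n d /\ 0 < d).

Definition improper_int_left (f : R -> R) (a b I : R) : Prop :=
  forall eps, 0 < eps -> exists delta, 0 < delta /\
    forall c, a < c < b -> c - a < delta ->
      exists pr : Riemann_integrable f c b, Rabs (RiemannInt pr - I) < eps.

Definition xi_integrand (phi : R -> R) (E0 kappa V : R) (E : R) : R :=
  phi (1 - E / E0) * Rpower ((E / V) ^ 2 - 1) kappa.

Definition is_xi (phi : R -> R) (E0 kappa V x : R) : Prop :=
  exists I, improper_int_left (xi_integrand phi E0 kappa V) V E0 I /\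
            x = 4 * PI / V * I.

(* Main.v *)
Require Import Defs.
From Stdlib Require Import Factorial.
From Stdlib Require Import Reals Lra Lia.
Open Scope R_scope.

Lemma terms_bounded (a : nat -> R) (L : R) :
  infinite_sum a L -> exists B, 0 <= B /\ forall j, Rabs (a j) <= B.
Proof.
  intros H. destruct (H 1 ltac:(lra)) as [N HN].
  exists (2 + Rabs L + sum_f_R0 (fun j => Rabs (a j)) N).
  assert (Hs : forall M, 0 <= sum_f_R0 (fun j => Rabs (a j)) M).
  { intros M. apply cond_pos_sum. intros; apply Rabs_pos. }
  split. { pose proof (Hs N); pose proof (Rabs_pos L); lra. }
  intros j. destruct (Compare_dec.le_lt_dec j N) as [Hj|Hj].
  - assert (Rabs (a j) <= sum_f_R0 (fun j => Rabs (a j)) N).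
    { clear HN H. induction N.
      + replace j with 0%nat by lia. simpl; lra.
      + destruct (Nat.eq_dec j (S N)) as [->|Hne].
        * simpl. pose proof (Hs N); lra.
        * simpl. assert (j <= N)%nat by lia. specialize (IHN H). pose proof (Rabs_pos (a (S N))); lra. }
    pose proof (Rabs_pos L); lra.
  - destruct j as [|j]; [lia|].
    assert (H1 := HN j ltac:(lia)). assert (H2 := HN (S j) ltac:(lia)).
    unfold R_dist in *. simpl in H2.
    replace (a (S j)) with ((sum_f_R0 a j + a (S j) - L) - (sum_f_R0 a j - L)) by ring.
    pose proof (Rabs_triang_inv2 (sum_f_R0 a j + a (S j) - L) (sum_f_R0 a j - L)).
    pose proof (Rabs_triang (sum_f_R0 a j + a (S j) - L) (-(sum_f_R0 a j - L))).
    rewrite Rabs_Ropp in H3. pose proof (Hs N); pose proof (Rabs_pos L).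
    unfold Rminus at 1. lra.
Qed.

Lemma sum_zero_below (f : nat -> R) m N :
  (forall j, (j < m)%nat -> f j = 0) -> (N < m)%nat -> sum_f_R0 f N = 0.
Proof.
  intros Hf HN. induction N.
  - simpl. apply Hf. lia.
  - simpl. rewrite IHN by lia. rewrite Hf by lia. ring.
Qed.

Lemma tail_bound (a : nat -> R) m B rho t L :
  (forall j, (j < m)%nat -> a j = 0) -> 0 < rho ->
  (forall j, Rabs (a j) * rho ^ j <= B) -> Rabs t <= rho / 2 ->
  infinite_sum (fun j => a j * t ^ j) L ->
  Rabs (L - a m * t ^ m) <= 2 * B * (Rabs t / rho) ^ (S m).
Proof.
  intros Hz Hr HB Ht HL.
  set (y := Rabs t / rho).
  assert (Hy0 : 0 <= y) by (unfold y; apply Rmult_le_pos; [apply Rabs_pos| left; apply Rinv_0_lt_compat; lra]).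
  assert (Hy1 : y <= 1/2).
  { unfold y. apply (Rmult_le_reg_r rho); [lra|]. unfold Rdiv. rewrite Rmult_assoc, Rinv_l by lra. lra. }
  assert (Hterm : forall j, Rabs (a j * t ^ j) <= B * y ^ j).
  { intros j. rewrite Rabs_mult, <- RPow_abs.
    replace (Rabs t) with (rho * y) by (unfold y; field; lra).
    rewrite Rpow_mult_distr, <- Rmult_assoc. apply Rmult_le_compat_r.
    - apply pow_le; lra.
    - apply HB. }
  assert (HB0 : 0 <= B) by (specialize (HB 0%nat); pose proof (Rabs_pos (a 0%nat)); simpl in HB; lra).
  assert (Hsm : sum_f_R0 (fun j => a j * t ^ j) m = a m * t ^ m).
  { destruct m as [|m]. - reflexivity. - simpl. rewrite (sum_zero_below _ (S m) m). ring.
    intros j Hj; rewrite Hz by lia; ring. lia. }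
  assert (Hpart : forall k, Rabs (sum_f_R0 (fun j => a j * t ^ j) (m + k) - a m * t ^ m)
                         <= B * (y ^ (S m) - y ^ (S (m + k))) / (1 - y)).
  { induction k.
    - rewrite Nat.add_0_r, Hsm. unfold Rminus at 1. rewrite Rplus_opp_r, Rabs_R0.
      unfold Rdiv. rewrite Rminus_diag. rewrite Rmult_0_r, Rmult_0_l. lra.
    - replace (m + S k)%nat with (S (m + k)) by lia. rewrite tech5.
      replace (sum_f_R0 (fun j => a j * t ^ j) (m + k) + a (S (m + k)) * t ^ S (m + k) - a m * t ^ m)
        with ((sum_f_R0 (fun j => a j * t ^ j) (m + k) - a m * t ^ m) + a (S (m + k)) * t ^ S (m + k)) by ring.
      eapply Rle_trans; [apply Rabs_triang|].
      pose proof (Hterm (S (m + k))).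
      replace (B * (y ^ S m - y ^ S (S (m + k))) / (1 - y)) with
        (B * (y ^ S m - y ^ S (m + k)) / (1 - y) + B * y ^ S (m + k))
        by (simpl; field; lra).
      lra. }
  apply Rnot_lt_le. intros Hlt.
  set (eps := Rabs (L - a m * t ^ m) - 2 * B * y ^ S m).
  assert (He : 0 < eps) by (unfold eps; lra).
  destruct (HL eps He) as [N HN].
  specialize (HN (m + N)%nat ltac:(lia)). specialize (Hpart N).
  unfold Rdist in HN.
  assert (B * (y ^ S m - y ^ S (m + N)) / (1 - y) <= 2 * B * y ^ S m).
  { apply (Rmult_le_reg_r (1 - y)); [lra|]. unfold Rdiv. rewrite Rmult_assoc, Rinv_l by lra.
    pose proof (pow_le y (S (m+N)) Hy0). pose proof (pow_le y (S m) Hy0).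
    assert (0 <= B * y ^ S (m+N)) by (apply Rmult_le_pos; lra).
    assert (0 <= B * y ^ S m) by (apply Rmult_le_pos; lra). nra. }
  pose proof (Rabs_triang (L - sum_f_R0 (fun j => a j * t ^ j) (m + N))
                         (sum_f_R0 (fun j => a j * t ^ j) (m + N) - a m * t ^ m)).
  replace (L - sum_f_R0 (fun j => a j * t ^ j) (m + N) +
        (sum_f_R0 (fun j => a j * t ^ j) (m + N) - a m * t ^ m)) with (L - a m * t^m) in H0 by ring.
  rewrite Rabs_minus_sym in HN. unfold eps in *. lra.
Qed.

Lemma pow_div' x y k : y <> 0 -> (x / y) ^ k = x ^ k / y ^ k.
Proof. intros Hy. induction k; simpl. field. rewrite IHk. field. split; auto. apply pow_nonzero; auto. Qed.

Lemma bound_from_conv (c : nat -> R) rho L : 0 <= rho ->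
  infinite_sum (fun j => c j * rho ^ j) L -> exists B, 0 <= B /\ forall j, Rabs (c j) * rho ^ j <= B.
Proof.
  intros Hr H. destruct (terms_bounded _ _ H) as [B [HB0 HB]]. exists B. split; auto.
  intros j. specialize (HB j). rewrite Rabs_mult, (Rabs_right (rho ^ j)) in HB; auto.
  apply Rle_ge, pow_le; auto.
Qed.

Lemma zero_series (c : nat -> R) rho : 0 < rho ->
  (forall t, 0 <= t < rho -> infinite_sum (fun j => c j * t ^ j) 0) -> forall j, c j = 0.
Proof.
  intros Hr H.
  set (r := rho / 2).
  destruct (bound_from_conv c r 0 ltac:(unfold r; lra) (H r ltac:(unfold r; lra))) as [B [HB0 HB]].
  intros j. induction j as [m IH] using (well_founded_induction Wf_nat.lt_wf).
  destruct (Req_dec (c m) 0) as [|Hne]; auto. exfalso.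
  assert (Hc : 0 < Rabs (c m)) by (apply Rabs_pos_lt; auto).
  assert (HQ : 0 < r ^ S m) by (apply pow_lt; unfold r; lra).
  set (t := Rmin (r / 2) (Rabs (c m) * r ^ S m / (4 * B + 1))).
  assert (Ht0 : 0 < t).
  { unfold t. apply Rmin_pos. unfold r; lra. apply Rdiv_lt_0_compat; [apply Rmult_lt_0_compat; auto| lra]. }
  assert (Ht1 : t <= r / 2) by apply Rmin_l.
  assert (Ht2 : t <= Rabs (c m) * r ^ S m / (4 * B + 1)) by apply Rmin_r.
  assert (Hts : Rabs t <= r / 2) by (rewrite Rabs_right; lra).
  pose proof (tail_bound c m B r t 0 IH ltac:(unfold r; lra) HB Hts (H t ltac:(unfold r in *; lra))) as Hb.
  rewrite Rminus_0_l, Rabs_Ropp, Rabs_mult, (Rabs_right t) in Hb by lra.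
  rewrite <- RPow_abs, (Rabs_right t) in Hb by lra.
  rewrite pow_div' in Hb by (unfold r; lra).
  assert (HP : 0 < t ^ m) by (apply pow_lt; lra).
  simpl (t ^ S m) in Hb.
  assert (Rabs (c m) * t ^ m <= 2 * B * t * t ^ m / r ^ S m) by (rewrite Hb; right; field; lra).
  assert (Rabs (c m) <= 2 * B * t / r ^ S m).
  { apply (Rmult_le_reg_r (t ^ m)); auto. replace (2 * B * t / r ^ S m * t ^ m) with (2 * B * t * t ^ m / r ^ S m) by (field; lra). lra. }
  assert (2 * B * t / r ^ S m <= 2 * B * (Rabs (c m) / (4 * B + 1))).
  { unfold Rdiv at 1. rewrite Rmult_assoc. apply Rmult_le_compat_l; [lra|].
    apply (Rmult_le_reg_r (r ^ S m)); auto. rewrite Rmult_assoc, Rinv_l by lra.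
    replace (Rabs (c m) / (4 * B + 1) * r ^ S m) with (Rabs (c m) * r ^ S m / (4 * B + 1)) by (field; lra). lra. }
  assert (2 * B * (Rabs (c m) / (4 * B + 1)) < Rabs (c m)).
  { apply (Rmult_lt_reg_r (4 * B + 1)); [lra|].
    replace (2 * B * (Rabs (c m) / (4 * B + 1)) * (4 * B + 1)) with (2 * B * Rabs (c m)) by (field; lra). nra. }
  lra.
Qed.

Lemma infinite_sum_minus f g l1 l2 : infinite_sum f l1 -> infinite_sum g l2 ->
  infinite_sum (fun j => f j - g j) (l1 - l2).
Proof.
  intros Hf Hg eps He. destruct (Hf (eps/2) ltac:(lra)) as [N1 H1].
  destruct (Hg (eps/2) ltac:(lra)) as [N2 H2]. exists (N1 + N2)%nat. intros k Hk.
  rewrite minus_sum. specialize (H1 k ltac:(lia)). specialize (H2 k ltac:(lia)).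
  unfold Rdist in *.
  replace (sum_f_R0 f k - sum_f_R0 g k - (l1 - l2)) with ((sum_f_R0 f k - l1) - (sum_f_R0 g k - l2)) by ring.
  eapply Rle_lt_trans; [apply Rabs_triang|]. rewrite Rabs_Ropp. lra.
Qed.

Lemma phi_asym phi n eta : 0 < eta -> phi_assumptions phi n ->
  exists c d0, 0 < c /\ 0 < d0 /\ d0 <= 1 /\
    forall y, 0 <= y <= d0 -> (1 - eta) * c * y ^ n <= phi y <= (1 + eta) * c * y ^ n.
Proof.
  intros Heta [Hpos [Hneg [Han [Hlow [d [[r [Hr [a [Ha Hd]]]] Hd0]]]]]].
  assert (Hlo : forall k, (k < n)%nat -> a k = 0).
  { intros k Hk. destruct (Hlow k Hk) as [r' [Hr' [b [Hb Hbk]]]].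
    assert (Hbk0 : b k = 0).
    { pose proof (INR_fact_lt_0 k). apply (Rmult_eq_reg_l (INR (fact k))); lra. }
    assert (Hz := zero_series (fun j => a j - b j) (Rmin (Rmin r r') 1)).
    assert (Hpz : 0 < Rmin (Rmin r r') 1) by (repeat apply Rmin_pos; lra).
    specialize (Hz Hpz).
    assert (a k - b k = 0).
    { apply Hz. intros t Ht.
      pose proof (Rmin_l (Rmin r r') 1). pose proof (Rmin_r (Rmin r r') 1).
      pose proof (Rmin_l r r'). pose proof (Rmin_r r r').
      replace 0 with (phi t - phi t) by ring.
      assert (E := infinite_sum_minus _ _ _ _ (Ha t ltac:(lra) ltac:(lra)) (Hb t ltac:(lra) ltac:(lra))).
      intros eps He. destruct (E eps He) as [N HN]. exists N. intros k0 Hk0.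
      specialize (HN k0 Hk0).
      replace (sum_f_R0 (fun j => (a j - b j) * t ^ j) k0) with
        (sum_f_R0 (fun j => a j * t ^ j - b j * t ^ j) k0); auto.
      apply sum_eq. intros; ring. }
    lra. }
  assert (Han0 : 0 < a n).
  { pose proof (INR_fact_lt_0 n). subst d. 
    destruct (Rlt_le_dec 0 (a n)); auto. nra. }
  set (rho := Rmin r 1 / 2).
  assert (Hrho : 0 < rho) by (unfold rho; pose proof (Rmin_pos r 1 ltac:(lra) ltac:(lra)); lra).
  assert (Hrho1 : rho <= 1 /\ rho < r).
  { unfold rho. pose proof (Rmin_l r 1). pose proof (Rmin_r r 1). pose proof (Rmin_pos r 1 ltac:(lra) ltac:(lra)). lra. }
  destruct (bound_from_conv a rho (phi rho) ltac:(lra) (Ha rho ltac:(lra) ltac:(lra))) as [B [HB0 HB]].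
  set (K := 2 * B / rho ^ S n).
  assert (HK : 0 <= K) by (unfold K; apply Rmult_le_pos; [lra|left; apply Rinv_0_lt_compat, pow_lt; lra]).
  exists (a n), (Rmin (rho / 2) (eta * a n / (K + 1))).
  assert (Hq : 0 < eta * a n / (K + 1)) by (apply Rdiv_lt_0_compat; [nra|lra]).
  split; auto. split. { apply Rmin_pos; lra. } split. { pose proof (Rmin_l (rho / 2) (eta * a n / (K + 1))). lra. }
  intros y Hy. pose proof (Rmin_l (rho / 2) (eta * a n / (K + 1))). pose proof (Rmin_r (rho / 2) (eta * a n / (K + 1))).
  assert (Hyr : Rabs y <= rho / 2) by (rewrite Rabs_right; lra).
  pose proof (tail_bound a n B rho y (phi y) Hlo Hrho HB Hyr (Ha y ltac:(lra) ltac:(lra))) as Ht.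
  rewrite (Rabs_right y) in Ht by lra. rewrite pow_div' in Ht by lra.
  assert (Hyn : 0 <= y ^ n) by (apply pow_le; lra).
  assert (HT : 2 * B * (y ^ S n / rho ^ S n) = K * y * y ^ n) by (unfold K; change (y ^ S n) with (y * y ^ n); field; apply pow_nonzero; lra).
  rewrite HT in Ht.
  assert (K * y <= eta * a n).
  { assert (y * (K + 1) <= eta * a n).
    { apply (Rmult_le_reg_r (/ (K + 1))). apply Rinv_0_lt_compat; lra.
      rewrite Rmult_assoc, Rinv_r by lra. unfold Rdiv in *. lra. }
    nra. }
  assert (K * y * y ^ n <= eta * a n * y ^ n) by (apply Rmult_le_compat_r; auto).
  pose proof (Rle_abs (phi y - a n * y ^ n)). pose proof (Rle_abs (- (phi y - a n * y ^ n))).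
  rewrite Rabs_Ropp in H4. split; nra.
Qed.

Lemma phi_cont01 phi : analytic_on_01 phi -> forall z0, 0 <= z0 < 1 ->
  forall eps, 0 < eps -> exists del, 0 < del /\
    forall z, 0 <= z <= 1 -> Rabs (z - z0) < del -> Rabs (phi z - phi z0) < eps.
Proof.
  intros Han z0 Hz0 eps He.
  destruct (Han z0 ltac:(lra)) as [r [Hr [a Ha]]].
  set (rho := Rmin r (1 - z0) / 2).
  assert (Hm := Rmin_pos r (1 - z0) Hr ltac:(lra)).
  pose proof (Rmin_l r (1 - z0)). pose proof (Rmin_r r (1 - z0)).
  assert (Hrho : 0 < rho) by (unfold rho; lra).
  assert (Hc := Ha (z0 + rho) ltac:(unfold rho in *; lra)
                 ltac:(replace (z0 + rho - z0) with rho by ring; rewrite Rabs_right; unfold rho in *; lra)).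
  replace (z0 + rho - z0) with rho in Hc by ring.
  destruct (bound_from_conv a rho _ ltac:(lra) Hc) as [B [HB0 HB]].
  assert (Hz : forall z, 0 <= z <= 1 -> Rabs (z - z0) <= rho / 2 ->
             Rabs (phi z - a 0%nat) <= 2 * B * (Rabs (z - z0) / rho)).
  { intros z Hz1 Hz2.
    assert (Hs := Ha z Hz1 ltac:(unfold rho in *; lra)).
    pose proof (tail_bound a 0 B rho (z - z0) (phi z) ltac:(intros; lia) Hrho HB Hz2 Hs).
    simpl in H1. rewrite !Rmult_1_r in H1. exact H1. }
  assert (Hp0 : phi z0 = a 0%nat).
  { pose proof (Hz z0 ltac:(lra) ltac:(unfold Rminus; rewrite Rplus_opp_r, Rabs_R0; lra)).
    unfold Rminus in H1. rewrite Rplus_opp_r, Rabs_R0 in H1. unfold Rdiv in H1. rewrite Rmult_0_l, Rmult_0_r in H1.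
    pose proof (Rabs_pos (phi z0 + - a 0%nat)).
    assert (Rabs (phi z0 + - a 0%nat) = 0) by lra. destruct (Req_dec (phi z0 + - a 0%nat) 0) as [|Hn]; [lra|]. apply Rabs_no_R0 in Hn. lra. }
  exists (Rmin (rho / 2) (eps * rho / (2 * B + 1))).
  assert (0 < eps * rho / (2 * B + 1)) by (apply Rdiv_lt_0_compat; [nra|lra]).
  split. { apply Rmin_pos; lra. }
  intros z Hz1 Hz2. pose proof (Rmin_l (rho / 2) (eps * rho / (2 * B + 1))). pose proof (Rmin_r (rho / 2) (eps * rho / (2 * B + 1))).
  rewrite Hp0. eapply Rle_lt_trans; [apply Hz; auto; lra|].
  set (d := Rabs (z - z0)) in *.
  assert (d * (2 * B + 1) < eps * rho).
  { apply (Rmult_lt_reg_r (/ (2 * B + 1))). apply Rinv_0_lt_compat; lra.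
    rewrite Rmult_assoc, Rinv_r by lra. unfold Rdiv in *. lra. }
  assert (0 <= d) by apply Rabs_pos.
  apply (Rmult_lt_reg_r rho); auto. unfold Rdiv. rewrite !Rmult_assoc, Rinv_l by lra. nra.
Qed.

Definition phic (phi : R -> R) (y : R) : R := phi (Rmax 0 y).

Lemma phic_cont phi : analytic_on_01 phi -> forall y0, y0 < 1 -> continuity_pt (phic phi) y0.
Proof.
  intros Han y0 Hy0 eps He.
  assert (Hm0 : 0 <= Rmax 0 y0 < 1) by (split; [apply Rmax_l| apply Rmax_lub_lt; lra]).
  destruct (phi_cont01 phi Han (Rmax 0 y0) Hm0 eps He) as [del [Hd Hdel]].
  exists (Rmin del (1 - y0)). split. { apply Rmin_pos; lra. }
  intros y [_ Hy]. change (Rabs (y - y0) < Rmin del (1 - y0)) in Hy. change (Rabs (phic phi y - phic phi y0) < eps). unfold phic.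
  pose proof (Rmin_l del (1 - y0)). pose proof (Rmin_r del (1 - y0)).
  apply Hdel.
  - split. apply Rmax_l. apply Rmax_lub; [lra|]. pose proof (Rle_abs (y - y0)). lra.
  - eapply Rle_lt_trans; [|eapply Rlt_le_trans; [exact Hy| exact H]].
    unfold Rmax. destruct (Rle_dec 0 y), (Rle_dec 0 y0); unfold Rabs; repeat destruct Rcase_abs; lra.
Qed.

From Coquelicot Require Import Coquelicot.

Definition sq (w : R) := sqrt (1 + w ^ 2).
Definition Xf V E0 w := 1 - V * sq w / E0.
Definition h1 phi V E0 w := V * phic phi (Xf V E0 w) * w ^ 2 / sq w.
Definition h2 phi V E0 w := V * phic phi (Xf V E0 w) / sq w.
Definition fk phi V E0 k E := phic phi (1 - E / E0) * Rpower ((E / V) ^ 2 - 1) k.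

Lemma sq_pos w : 0 < sq w.
Proof. unfold sq. apply sqrt_lt_R0. pose proof (pow2_ge_0 w); lra. Qed.
Lemma sq_ge1 w : 1 <= sq w.
Proof. unfold sq. rewrite <- sqrt_1 at 1. apply sqrt_le_1_alt. pose proof (pow2_ge_0 w); lra. Qed.
Lemma sq_sq w : sq w ^ 2 = 1 + w ^ 2.
Proof. unfold sq. apply pow2_sqrt. pose proof (pow2_ge_0 w); lra. Qed.

Lemma exd_cont (f : R -> R) x : ex_derive f x -> continuous f x.
Proof. intros H. apply (@ex_derive_continuous R_AbsRing R_NormedModule). exact H. Qed.

Lemma cont_mult_R (f g : R -> R) x : continuous f x -> continuous g x -> continuous (fun y => f y * g y) x.
Proof. intros Hf Hg. apply (@continuous_mult R_UniformSpace R_AbsRing f g x Hf Hg). Qed.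
Lemma cont_comp_R (f g : R -> R) x : continuous f x -> continuous g (f x) -> continuous (fun y => g (f y)) x.
Proof. intros Hf Hg. apply (@continuous_comp R_UniformSpace R_UniformSpace R_UniformSpace f g x Hf Hg). Qed.

Lemma cont_phic phi : analytic_on_01 phi -> forall y, y < 1 -> continuous (phic phi) y.
Proof. intros Han y Hy. apply continuity_pt_filterlim. apply phic_cont; auto. Qed.

Lemma cont_phicX phi V E0 : analytic_on_01 phi -> 0 < V -> 0 < E0 ->
  forall w, continuous (fun w => phic phi (Xf V E0 w)) w.
Proof.
  intros Han HV HE w. apply (cont_comp_R (Xf V E0) (phic phi)).
  - apply exd_cont. unfold Xf, sq. auto_derive. nra.
  - apply cont_phic; auto. unfold Xf. pose proof (sq_pos w).
    assert (0 < V * sq w / E0) by (apply Rdiv_lt_0_compat; nra). lra.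
Qed.

Lemma cont_h1 phi V E0 : analytic_on_01 phi -> 0 < V -> 0 < E0 -> forall w, continuous (h1 phi V E0) w.
Proof.
  intros Han HV HE w.
  assert (H : continuous (fun w => (phic phi (Xf V E0 w)) * (V * w ^ 2 / sq w)) w).
  { apply (cont_mult_R _ _). apply cont_phicX; auto.
    apply exd_cont. unfold sq. auto_derive. pose proof (sq_pos w). unfold sq in H. replace (w * (w * 1)) with (w ^ 2) by ring. pose proof (pow2_ge_0 w). repeat split; lra. }
  revert H. apply continuous_ext. intros x. unfold h1. lazymatch goal with |- ?a = ?b => change (@eq R a b) end. field. apply Rgt_not_eq, sq_pos.
Qed.

Lemma cont_h2 phi V E0 : analytic_on_01 phi -> 0 < V -> 0 < E0 -> forall w, continuous (h2 phi V E0) w.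
Proof.
  intros Han HV HE w.
  assert (H : continuous (fun w => (phic phi (Xf V E0 w)) * (V / sq w)) w).
  { apply (cont_mult_R _ _). apply cont_phicX; auto.
    apply exd_cont. unfold sq. auto_derive. pose proof (sq_pos w). unfold sq in H. replace (w * (w * 1)) with (w ^ 2) by ring. pose proof (pow2_ge_0 w). repeat split; lra. }
  revert H. apply continuous_ext. intros x. unfold h2. lazymatch goal with |- ?a = ?b => change (@eq R a b) end. field. apply Rgt_not_eq, sq_pos.
Qed.

Lemma cont_fk phi V E0 k : analytic_on_01 phi -> 0 < V -> 0 < E0 ->
  forall E, V < E -> continuous (fk phi V E0 k) E.
Proof.
  intros Han HV HE E HVE.
  assert (Hu : 0 < (E / V) ^ 2 - 1).
  { assert (1 < E / V) by (apply (Rmult_lt_reg_r V); auto; unfold Rdiv; rewrite Rmult_assoc, Rinv_l; lra). nra. }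
  apply (cont_mult_R (fun E => phic phi (1 - E / E0)) (fun E => Rpower ((E / V) ^ 2 - 1) k)).
  - apply (cont_comp_R (fun E => 1 - E / E0) (phic phi)).
    + apply exd_cont. auto_derive. lra.
    + apply cont_phic; auto. assert (0 < E / E0) by (apply Rdiv_lt_0_compat; lra). lra.
  - apply exd_cont. unfold Rpower. auto_derive. replace (E * / V * (E * / V * 1) + - (1)) with ((E / V) ^ 2 - 1) by (simpl; field; lra). lra.
Qed.

Definition wof V c := sqrt ((c / V) ^ 2 - 1).

Lemma wof_pos V c : 0 < V -> V < c -> 0 < wof V c.
Proof.
  intros HV Hc. unfold wof. apply sqrt_lt_R0.
  assert (1 < c / V) by (apply (Rmult_lt_reg_r V); auto; unfold Rdiv; rewrite Rmult_assoc, Rinv_l; lra). nra.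
Qed.

Lemma wof_sq V c : 0 < V -> V <= c -> wof V c ^ 2 = (c / V) ^ 2 - 1.
Proof.
  intros HV Hc. unfold wof. apply pow2_sqrt.
  assert (1 <= c / V) by (apply (Rmult_le_reg_r V); auto; unfold Rdiv; rewrite Rmult_assoc, Rinv_l; lra). nra.
Qed.

Lemma G_wof V c : 0 < V -> V <= c -> V * sq (wof V c) = c.
Proof.
  intros HV Hc. unfold sq. rewrite wof_sq by auto. replace (1 + ((c / V) ^ 2 - 1)) with ((c / V) ^ 2) by ring.
  rewrite sqrt_pow2. field. lra. apply Rmult_le_pos; [lra| left; apply Rinv_0_lt_compat; lra].
Qed.

Lemma sq_gt1 x : 0 < x -> 1 < sq x.
Proof. intros Hx. unfold sq. rewrite <- sqrt_1 at 1. apply sqrt_lt_1_alt. split; [lra|]. nra. Qed.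

Lemma cov phi V E0 k hk c : analytic_on_01 phi -> 0 < V -> 0 < E0 -> V < c -> c <= E0 ->
  (forall y, 0 < y -> V * y / sq y * (phic phi (Xf V E0 y) * Rpower (y ^ 2) k) = hk y) ->
  is_RInt hk (wof V c) (wof V E0) (RInt (fk phi V E0 k) c E0).
Proof.
  intros Han HV HE Hc HcE Hhk.
  set (a := wof V c). set (b := wof V E0).
  assert (Ha : 0 < a) by (apply wof_pos; auto).
  assert (Hab : a <= b).
  { unfold a, b, wof. apply sqrt_le_1_alt.
    assert (c / V <= E0 / V) by (unfold Rdiv; apply Rmult_le_compat_r; [left; apply Rinv_0_lt_compat|]; lra).
    assert (1 < c / V) by (apply (Rmult_lt_reg_r V); auto; unfold Rdiv; rewrite Rmult_assoc, Rinv_l; lra). nra. }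
  assert (H := is_RInt_comp (fk phi V E0 k) (fun y => V * sq y) (fun y => V * y / sq y) a b).
  cbv beta in H. assert (Ga : V * sq a = c) by (apply G_wof; lra). assert (Gb : V * sq b = E0) by (apply G_wof; lra). rewrite Ga, Gb in H.
  rewrite Rmin_left, Rmax_right in H by auto.
  assert (H' : is_RInt (fun y => scal (V * y / sq y) (fk phi V E0 k (V * sq y))) a b (RInt (fk phi V E0 k) c E0)).
  { apply H.
    - intros x Hx. apply cont_fk; auto. pose proof (sq_gt1 x ltac:(lra)). nra.
    - intros x Hx. split.
      + unfold sq. auto_derive. pose proof (pow2_ge_0 x). nra.
        pose proof (sq_pos x). unfold sq in H0. replace (1 + x * (x * 1)) with (1 + x ^ 2) by ring.
        field. lra.
      + apply exd_cont. unfold sq. auto_derive. pose proof (sq_pos x). unfold sq in H0. replace (x * (x * 1)) with (x ^ 2) by ring. pose proof (pow2_ge_0 x). repeat split; lra. }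
  revert H'. apply is_RInt_ext. rewrite Rmin_left, Rmax_right by auto. intros x Hx.
  rewrite <- Hhk by lra. unfold scal; simpl. unfold mult; simpl. unfold fk, Xf.
  replace ((V * sq x / V) ^ 2 - 1) with (x ^ 2).
  - replace (x * (x * 1)) with (x ^ 2) by ring. reflexivity.
  - replace (V * sq x / V) with (sq x) by (field; lra). rewrite sq_sq. ring.
Qed.

Lemma xi_of phi V E0 k hk : analytic_on_01 phi -> 0 < V -> V < E0 ->
  (forall y, 0 < y -> V * y / sq y * (phic phi (Xf V E0 y) * Rpower (y ^ 2) k) = hk y) ->
  (forall w, continuous hk w) ->
  is_xi phi E0 k V (4 * PI / V * RInt hk 0 (wof V E0)).
Proof.
  intros Han HV HVE Hhk Hcont.
  assert (HE : 0 < E0) by lra.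
  exists (RInt hk 0 (wof V E0)). split; [|reflexivity].
  intros eps He.
  assert (Hex : forall a b, ex_RInt hk a b) by (intros; apply (@ex_RInt_continuous R_CompleteNormedModule); auto).
  assert (HF : continuous (fun a => RInt hk 0 a) 0).
  { apply (continuous_RInt_0 hk 0 (fun a => RInt hk 0 a)). apply filter_forall. intros x. apply (@RInt_correct R_CompleteNormedModule). auto. }
  apply continuity_pt_filterlim in HF.
  destruct (HF eps He) as [d1 [Hd1 Hd1']].
  exists (d1 ^ 2 * V ^ 2 / (2 * E0)). split.
  { apply Rdiv_lt_0_compat; [apply Rmult_lt_0_compat; apply pow_lt|]; lra. }
  intros c Hc Hcd.
  assert (Hexf : ex_RInt (fk phi V E0 k) c E0).
  { apply (@ex_RInt_continuous R_CompleteNormedModule). intros z Hz. rewrite Rmin_left, Rmax_right in Hz by lra. apply cont_fk; auto; lra. }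
  assert (Hext : forall x, Rmin c E0 < x < Rmax c E0 -> fk phi V E0 k x = xi_integrand phi E0 k V x).
  { intros x Hx. rewrite Rmin_left, Rmax_right in Hx by lra. unfold fk, xi_integrand, phic.
    rewrite Rmax_right. reflexivity.
    assert (x / E0 < 1) by (apply (Rmult_lt_reg_r E0); auto; unfold Rdiv; rewrite Rmult_assoc, Rinv_l; lra). lra. }
  assert (Hexi : ex_RInt (xi_integrand phi E0 k V) c E0) by (apply (ex_RInt_ext _ _ _ _ Hext Hexf)).
  exists (ex_RInt_Reals_0 _ _ _ Hexi).
  rewrite <- RInt_Reals.
  rewrite <- (RInt_ext _ _ _ _ Hext).
  rewrite <- (is_RInt_unique _ _ _ _ (cov phi V E0 k hk c Han HV HE ltac:(lra) ltac:(lra) Hhk)).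
  rewrite <- (RInt_Chasles hk 0 (wof V c) (wof V E0)) by auto.
  unfold plus; simpl.
  replace (RInt hk (wof V c) (wof V E0) - (RInt hk 0 (wof V c) + RInt hk (wof V c) (wof V E0)))
    with (- (RInt hk 0 (wof V c) - RInt hk 0 0)) by (rewrite RInt_point; unfold zero; simpl; ring).
  rewrite Rabs_Ropp.
  apply (Hd1' (wof V c)). split. { unfold D_x, no_cond. split; auto. apply Rlt_not_eq, wof_pos; lra. }
  change (Rabs (wof V c - 0) < d1). rewrite Rminus_0_r.
  assert (Hw : 0 < wof V c) by (apply wof_pos; lra).
  rewrite Rabs_right by lra.
  assert (Hw2 : wof V c ^ 2 < d1 ^ 2).
  { rewrite wof_sq by lra.
    replace ((c / V) ^ 2 - 1) with ((c - V) * (c + V) / V ^ 2) by (field; lra).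
    apply (Rmult_lt_reg_r (V ^ 2)). apply pow_lt; lra.
    unfold Rdiv. rewrite Rmult_assoc, Rinv_l by (apply pow_nonzero; lra).
    assert ((c - V) * (2 * E0) < d1 ^ 2 * V ^ 2).
    { apply (Rmult_lt_reg_r (/ (2 * E0))). apply Rinv_0_lt_compat; lra.
      rewrite Rmult_assoc, Rinv_r, Rmult_1_r by lra. exact Hcd. }
    nra. }
  nra.
Qed.

Lemma is_RInt_lin (f g : R -> R) a b If Ig al be :
  is_RInt f a b If -> is_RInt g a b Ig ->
  is_RInt (fun x => al * f x - be * g x) a b (al * If - be * Ig).
Proof.
  intros Hf Hg. exact (is_RInt_minus _ _ a b _ _ (is_RInt_scal _ a b al _ Hf) (is_RInt_scal _ a b be _ Hg)).
Qed.

Lemma RInt_scal_R (f : R -> R) a b al : ex_RInt f a b -> RInt (fun x => al * f x) a b = al * RInt f a b.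
Proof. intros H. apply is_RInt_unique. exact (is_RInt_scal _ a b al _ (RInt_correct _ _ _ H)). Qed.

Lemma beta_id W n : 0 < W ->
  W ^ 2 * RInt (fun w => (W ^ 2 - w ^ 2) ^ n) 0 W =
  (2 * INR n + 3) * RInt (fun w => (W ^ 2 - w ^ 2) ^ n * w ^ 2) 0 W.
Proof.
  intros HW.
  assert (HA : ex_RInt (fun w => (W ^ 2 - w ^ 2) ^ n) 0 W).
  { apply (@ex_RInt_continuous R_CompleteNormedModule). intros. apply exd_cont. auto_derive. auto. }
  assert (HB : ex_RInt (fun w => (W ^ 2 - w ^ 2) ^ n * w ^ 2) 0 W).
  { apply (@ex_RInt_continuous R_CompleteNormedModule). intros. apply exd_cont. auto_derive. auto. }
  assert (H1 := is_RInt_lin _ _ 0 W _ _ (W ^ 2) (2 * INR n + 3) (RInt_correct _ _ _ HA) (RInt_correct _ _ _ HB)).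
  assert (H2 : is_RInt (fun w => W ^ 2 * (W ^ 2 - w ^ 2) ^ n - (2 * INR n + 3) * ((W ^ 2 - w ^ 2) ^ n * w ^ 2)) 0 W
                 (minus ((fun w => w * (W ^ 2 - w ^ 2) ^ (S n)) W) ((fun w => w * (W ^ 2 - w ^ 2) ^ (S n)) 0))).
  { apply (@is_RInt_derive R_CompleteNormedModule (fun w => w * (W ^ 2 - w ^ 2) ^ (S n))
      (fun w => W ^ 2 * (W ^ 2 - w ^ 2) ^ n - (2 * INR n + 3) * ((W ^ 2 - w ^ 2) ^ n * w ^ 2)) 0 W).
    - intros x _. auto_derive. auto. replace (match n with 0%nat => 1 | S _ => INR n + 1 end) with (INR n + 1) by (destruct n; simpl; ring). replace (W * (W * 1) + - (x * (x * 1))) with (W ^ 2 - x ^ 2) by ring. ring.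
    - intros x _. apply exd_cont. auto_derive. auto. }
  assert (E1 := is_RInt_unique _ _ _ _ H1). assert (E2 := is_RInt_unique _ _ _ _ H2).
  rewrite E1 in E2. cbv beta in E2.
  assert (Z : minus (W * (W ^ 2 - W ^ 2) ^ (S n)) (0 * (W ^ 2 - 0 ^ 2) ^ (S n)) = 0)
    by (unfold minus, plus, opp; simpl; ring).
  rewrite Z in E2. lra.
Qed.

Lemma h1_ok phi V E0 : forall y, 0 < y ->
  V * y / sq y * (phic phi (Xf V E0 y) * Rpower (y ^ 2) (1 / 2)) = h1 phi V E0 y.
Proof.
  intros y Hy. replace (1 / 2) with (/ 2) by field.
  rewrite Rpower_sqrt by (apply pow_lt; lra). rewrite sqrt_pow2 by lra.
  unfold h1. pose proof (sq_pos y). field. lra.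
Qed.

Lemma h2_ok phi V E0 : forall y, 0 < y ->
  V * y / sq y * (phic phi (Xf V E0 y) * Rpower (y ^ 2) (-1 / 2)) = h2 phi V E0 y.
Proof.
  intros y Hy. replace (-1 / 2) with (- / 2) by field.
  rewrite Rpower_Ropp, Rpower_sqrt by (apply pow_lt; lra). rewrite sqrt_pow2 by lra.
  unfold h2. pose proof (sq_pos y). field. lra.
Qed.

Lemma ratio phi V E0 n c d0 : analytic_on_01 phi -> (forall x, x <= 1 -> 0 <= phi x) ->
  0 < c -> 0 < V -> V < E0 ->
  (forall y, 0 <= y <= d0 -> (1 - 1/1000) * c * y ^ n <= phi y <= (1 + 1/1000) * c * y ^ n) ->
  1 - V / E0 <= d0 ->
  1001/1000 <= 101/100 * (999/1000) * (V / E0) ^ (S n) ->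
  0 < RInt (h2 phi V E0) 0 (wof V E0) /\
  RInt (h1 phi V E0) 0 (wof V E0) <= 101/100 * wof V E0 ^ 2 / (2 * INR n + 3) * RInt (h2 phi V E0) 0 (wof V E0).
Proof.
  intros Han Hpos Hc HV HVE Hphi Hd0 Hcond.
  set (W := wof V E0). set (rho := V / E0).
  assert (HE : 0 < E0) by lra.
  assert (HW : 0 < W) by (apply wof_pos; lra).
  assert (Hrho : 0 < rho) by (apply Rdiv_lt_0_compat; lra).
  assert (HSW : sq W = / rho).
  { assert (G := G_wof V E0 HV ltac:(lra)). fold W in G. unfold rho.
    replace (sq W) with (E0 / V) by (rewrite <- G; field; lra). field; lra. }
  assert (HSW2 : sq W ^ 2 = 1 + W ^ 2) by apply sq_sq.
  set (D := fun w => W ^ 2 - w ^ 2).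
  set (P := V * ((1 + 1/1000) * c) * rho ^ n / 2 ^ n).
  set (Q := V * ((1 - 1/1000) * c) * rho ^ (2 * n + 1) / 2 ^ n).
  assert (Hpt : forall w, 0 < w < W ->
    h1 phi V E0 w <= P * (D w ^ n * w ^ 2) /\ Q * D w ^ n <= h2 phi V E0 w).
  { intros w Hw.
    set (S := sq w).
    assert (HS1 : 1 <= S) by apply sq_ge1.
    assert (HSW' : S <= sq W) by (unfold S, sq; apply sqrt_le_1_alt; nra).
    assert (HSS : S ^ 2 = 1 + w ^ 2) by apply sq_sq.
    set (X := Xf V E0 w).
    assert (HX : X = rho * (sq W - S)) by (unfold X, Xf; fold S; rewrite HSW; unfold rho; field; split; lra).
    assert (HXD : X * (sq W + S) = rho * D w) by (rewrite HX; unfold D; nra).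
    assert (HX0 : 0 <= X) by (rewrite HX; apply Rmult_le_pos; lra).
    assert (HXd : X <= d0).
    { unfold X, Xf. fold S. assert (V * S / E0 = rho * S) by (unfold rho; field; lra). fold rho in Hd0. nra. }
    assert (HDp : 0 < D w) by (unfold D; nra).
    assert (Hphc : phic phi X = phi X) by (unfold phic; rewrite Rmax_right; auto).
    destruct (Hphi X ltac:(lra)) as [Hl Hu].
    assert (HXu : X <= rho * D w / 2) by (apply (Rmult_le_reg_r 2); [lra|]; unfold Rdiv; rewrite Rmult_assoc, Rinv_l by lra; nra).
    assert (HXl : rho ^ 2 * D w / 2 <= X).
    { apply (Rmult_le_reg_r (2 * sq W)). pose proof (sq_pos W); lra.
      replace (rho ^ 2 * D w / 2 * (2 * sq W)) with (rho * D w) by (rewrite HSW; field; lra).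
      rewrite <- HXD. apply Rmult_le_compat_l; lra. }
    assert (Hpu : X ^ n <= (rho * D w / 2) ^ n) by (apply pow_incr; lra).
    assert (Hpl : (rho ^ 2 * D w / 2) ^ n <= X ^ n).
    { apply pow_incr. split; auto. apply Rdiv_le_0_compat; [apply Rmult_le_pos; [apply pow_le|]|]; lra. }
    rewrite pow_div', Rpow_mult_distr in Hpu, Hpl by lra. rewrite <- pow_mult in Hpl.
    assert (H2n : 0 < 2 ^ n) by (apply pow_lt; lra).
    assert (Hrn : 0 < rho ^ n) by (apply pow_lt; lra).
    assert (Hr2n : 0 < rho ^ (2 * n)) by (apply pow_lt; lra).
    assert (HDn : 0 < D w ^ n) by (apply pow_lt; lra).
    assert (Hphi0 : 0 <= phi X). { apply Hpos. unfold X, Xf. fold S. assert (0 < V * S / E0) by (apply Rdiv_lt_0_compat; nra). lra. }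
    split.
    - unfold h1. fold X S. rewrite Hphc.
      assert (phi X <= (1 + 1/1000) * c * (rho ^ n * D w ^ n / 2 ^ n)) by (eapply Rle_trans; [exact Hu|]; apply Rmult_le_compat_l; lra).
      assert (V * phi X * w ^ 2 / S <= V * phi X * w ^ 2).
      { unfold Rdiv. rewrite <- (Rmult_1_r (V * phi X * w ^ 2)) at 2. apply Rmult_le_compat_l.
        apply Rmult_le_pos; [apply Rmult_le_pos|apply pow2_ge_0]; lra.
        rewrite <- Rinv_1. apply Rinv_le_contravar; lra. }
      eapply Rle_trans; [exact H0|]. unfold P.
      replace (V * ((1 + 1 / 1000) * c) * rho ^ n / 2 ^ n * (D w ^ n * w ^ 2)) with
        (V * ((1 + 1 / 1000) * c * (rho ^ n * D w ^ n / 2 ^ n)) * w ^ 2) by (field; lra).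
      apply Rmult_le_compat_r; [apply pow2_ge_0|]. apply Rmult_le_compat_l; lra.
    - unfold h2. fold X S. rewrite Hphc.
      assert ((1 - 1/1000) * c * (rho ^ (2 * n) * D w ^ n / 2 ^ n) <= phi X) by (eapply Rle_trans; [|exact Hl]; apply Rmult_le_compat_l; lra).
      assert (rho <= / S).
      { replace rho with (/ / rho) by (field; lra). apply Rinv_le_contravar; [lra|]. rewrite <- HSW. auto. }
      unfold Q. rewrite pow_add, pow_1.
      replace (V * ((1 - 1 / 1000) * c) * (rho ^ (2 * n) * rho) / 2 ^ n * D w ^ n) with
        (V * ((1 - 1 / 1000) * c * (rho ^ (2 * n) * D w ^ n / 2 ^ n)) * rho) by (field; lra).
      replace (V * phi X / S) with (V * phi X * / S) by reflexivity.
      assert (0 <= (1 - 1 / 1000) * c * (rho ^ (2 * n) * D w ^ n / 2 ^ n)).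
      { apply Rmult_le_pos; [lra|]. apply Rdiv_le_0_compat; [|lra]. apply Rmult_le_pos; lra. }
      apply Rmult_le_compat; [apply Rmult_le_pos; lra | lra | apply Rmult_le_compat_l; lra | lra]. }
  assert (Hc1 : forall w, continuous (h1 phi V E0) w) by (apply cont_h1; [exact Han|lra|lra]).
  assert (Hc2 : forall w, continuous (h2 phi V E0) w) by (apply cont_h2; [exact Han|lra|lra]).
  assert (HcA : forall w, continuous (fun w => D w ^ n) w) by (intros; apply exd_cont; unfold D; auto_derive; auto).
  assert (HcB : forall w, continuous (fun w => P * (D w ^ n * w ^ 2)) w) by (intros; apply exd_cont; unfold D; auto_derive; auto).
  assert (HcQ : forall w, continuous (fun w => Q * D w ^ n) w) by (intros; apply exd_cont; unfold D; auto_derive; auto).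
  assert (Hex : forall f, (forall w, continuous f w) -> ex_RInt f 0 W) by (intros; apply (@ex_RInt_continuous R_CompleteNormedModule); auto).
  assert (I1le : RInt (h1 phi V E0) 0 W <= RInt (fun w => P * (D w ^ n * w ^ 2)) 0 W).
  { apply RInt_le; auto; try lra. intros; apply Hpt; auto. }
  assert (I2ge : RInt (fun w => Q * D w ^ n) 0 W <= RInt (h2 phi V E0) 0 W).
  { apply RInt_le; auto; try lra. intros; apply Hpt; auto. }
  rewrite RInt_scal_R in I1le, I2ge by (apply Hex; intros; apply exd_cont; unfold D; auto_derive; auto).
  assert (HA : 0 < RInt (fun w => D w ^ n) 0 W).
  { apply RInt_gt_0; auto. intros x Hx. apply pow_lt. unfold D. nra. }
  assert (Hb := beta_id W n HW). fold D in Hb.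
  change (RInt (fun w => (W ^ 2 - w ^ 2) ^ n) 0 W) with (RInt (fun w => D w ^ n) 0 W) in Hb.
  change (RInt (fun w => (W ^ 2 - w ^ 2) ^ n * w ^ 2) 0 W) with (RInt (fun w => D w ^ n * w ^ 2) 0 W) in Hb.
  set (A := RInt (fun w => D w ^ n) 0 W) in *.
  set (B := RInt (fun w => D w ^ n * w ^ 2) 0 W) in *.
  assert (Hn3 : 0 < 2 * INR n + 3) by (pose proof (pos_INR n); lra).
  assert (HPQ : P <= 101/100 * Q).
  { unfold P, Q. replace (2 * n + 1)%nat with (n + S n)%nat by lia. rewrite pow_add.
    assert (H2n : 0 < 2 ^ n) by (apply pow_lt; lra).
    assert (Hrn : 0 < rho ^ n) by (apply pow_lt; lra).
    assert (0 < V * c * rho ^ n / 2 ^ n) by (apply Rdiv_lt_0_compat; [repeat apply Rmult_lt_0_compat|]; lra).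
    replace (V * ((1 + 1 / 1000) * c) * rho ^ n / 2 ^ n) with ((V * c * rho ^ n / 2 ^ n) * (1001/1000)) by (field; lra).
    replace (101 / 100 * (V * ((1 - 1 / 1000) * c) * (rho ^ n * rho ^ S n) / 2 ^ n)) with
      ((V * c * rho ^ n / 2 ^ n) * (101 / 100 * (999 / 1000) * rho ^ S n)) by (field; lra).
    apply Rmult_le_compat_l; [lra|]. exact Hcond. }
  assert (HQ : 0 < Q).
  { unfold Q. apply Rdiv_lt_0_compat; [repeat apply Rmult_lt_0_compat|apply pow_lt]; try lra. apply pow_lt; lra. }
  split. { assert (0 < Q * A) by (apply Rmult_lt_0_compat; auto). lra. }
  assert (HBv : @eq R B (W ^ 2 * A / (2 * INR n + 3))) by (apply (Rmult_eq_reg_l (2 * INR n + 3)); [|lra]; rewrite <- Hb; field; lra).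
  assert (0 <= B) by (rewrite HBv; apply Rdiv_le_0_compat; [apply Rmult_le_pos; [apply pow2_ge_0|]|]; lra).
  assert (P * B <= 101/100 * Q * B) by (apply Rmult_le_compat_r; lra).
  assert (101/100 * Q * B = 101 / 100 * W ^ 2 / (2 * INR n + 3) * (Q * A)) by (rewrite HBv; field; lra).
  assert (0 <= 101 / 100 * W ^ 2 / (2 * INR n + 3)) by (apply Rdiv_le_0_compat; [apply Rmult_le_pos; [lra|apply pow2_ge_0]|lra]).
  assert (101 / 100 * W ^ 2 / (2 * INR n + 3) * (Q * A) <= 101 / 100 * W ^ 2 / (2 * INR n + 3) * RInt (h2 phi V E0) 0 W)
    by (apply Rmult_le_compat_l; lra).
  lra.
Qed.


Lemma bernoulli x k : 0 <= x <= 1 -> 1 - INR k * x <= (1 - x) ^ k.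
Proof.
  intros Hx. induction k.
  - simpl. lra.
  - rewrite S_INR. simpl. assert (0 <= (1 - x) ^ k) by (apply pow_le; lra).
    pose proof (pos_INR k). nra.
Qed.

Lemma final_alg (I1 I2 V E0 W2 k : R) : 0 < I2 -> 0 < V -> 0 < k ->
  I1 <= 101/100 * W2 / k * I2 -> W2 = (E0 / V) ^ 2 - 1 ->
  (4 * PI / V * I1) / (4 * PI / V * I2) <= 101 * (E0 + V) * (E0 - V) / (100 * k * V ^ 2).
Proof.
  intros HI2 HV Hk HI HW. pose proof PI_RGT_0.
  replace ((4 * PI / V * I1) / (4 * PI / V * I2)) with (I1 / I2) by (field; repeat split; lra).
  replace (101 * (E0 + V) * (E0 - V) / (100 * k * V ^ 2)) with (101 / 100 * W2 / k) by (rewrite HW; field; lra).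
  apply (Rmult_le_reg_r I2); auto. unfold Rdiv at 1. rewrite Rmult_assoc, Rinv_l by lra. lra.
Qed.

Theorem mainTheorem5 (E0 : R) (phi : R -> R) (n : nat) :
  0 < E0 ->
  phi_assumptions phi n ->
  exists Vs, 0 < Vs < E0 /\
    forall V, Vs <= V < E0 ->
      exists x1 x2,
        is_xi phi E0 (1/2) V x1 /\
        is_xi phi E0 (-1/2) V x2 /\
        x1 / x2 <= 101 * (E0 + V) * (E0 - V) / (100 * (3 + 2 * INR n) * V ^ 2).
Proof.
  intros HE Hass.
  destruct (phi_asym phi n (1/1000) ltac:(lra) Hass) as [c [d0 [Hc [Hd0 [Hd01 Hphi]]]]].
  destruct Hass as [Hpos [_ [Han _]]].
  assert (Hn1 : 0 < INR n + 1) by (pose proof (pos_INR n); lra).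
  set (s := Rmin d0 (1 / (200 * (INR n + 1)))).
  assert (Hs0 : 0 < s) by (apply Rmin_pos; [lra|apply Rdiv_lt_0_compat; lra]).
  assert (Hs1 : s <= d0) by apply Rmin_l.
  assert (Hs2 : s <= 1 / (200 * (INR n + 1))) by apply Rmin_r.
  assert (Hs3 : s * (INR n + 1) <= 1 / 200).
  { apply (Rmult_le_reg_r (/ (INR n + 1))). apply Rinv_0_lt_compat; lra.
    rewrite Rmult_assoc, Rinv_r by lra. replace (1 / 200 * / (INR n + 1)) with (1 / (200 * (INR n + 1))) by (field; lra). lra. }
  assert (Hs4 : s <= 1 / 200) by (pose proof (pos_INR n); nra).
  exists (E0 * (1 - s)). split. { split; [apply Rmult_lt_0_compat; lra|]. assert (0 < E0 * s) by (apply Rmult_lt_0_compat; lra). lra. }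
  intros V HV.
  assert (HV0 : 0 < V) by nra.
  set (rho := V / E0).
  assert (Hrho : 1 - s <= rho /\ rho < 1).
  { unfold rho. split.
    - apply (Rmult_le_reg_r E0); auto. unfold Rdiv. rewrite Rmult_assoc, Rinv_l by lra. lra.
    - apply (Rmult_lt_reg_r E0); auto. unfold Rdiv. rewrite Rmult_assoc, Rinv_l by lra. lra. }
  assert (Hcond : 1001/1000 <= 101/100 * (999/1000) * rho ^ (S n)).
  { replace rho with (1 - (1 - rho)) by ring.
    pose proof (bernoulli (1 - rho) (S n) ltac:(lra)). rewrite S_INR in H.
    assert ((INR n + 1) * (1 - rho) <= 1/200) by nra. lra. }
  destruct (ratio phi V E0 n c d0 Han Hpos Hc HV0 ltac:(lra) Hphi ltac:(fold rho; lra) Hcond) as [HI2 HI].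
  exists (4 * PI / V * RInt (h1 phi V E0) 0 (wof V E0)), (4 * PI / V * RInt (h2 phi V E0) 0 (wof V E0)).
  split; [|split].
  - apply xi_of; auto; try lra. apply h1_ok. apply cont_h1; auto; lra.
  - apply xi_of; auto; try lra. apply h2_ok. apply cont_h2; auto; lra.
  - replace (3 + 2 * INR n) with (2 * INR n + 3) by ring.
    apply (final_alg _ _ V E0 (wof V E0 ^ 2)); auto. pose proof (pos_INR n); lra.
    apply wof_sq; lra.
Qed.
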